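(* Let $(S,* )$ be a finite cycle set of class $d\ge 2$ with germ $\overline G$. Then $\overline G$ is permutation-free: the only permutation matrix belonging to $\overline G$ is the identity matrix.
   Context: A cycle set is a set $S$ with a binary operation $*$ such that each $t\mapsto s*t$ is bijective and $(s*t)*(s*u)=(t*s)*(t*u)$ for all $s,t,u$. Write $S=\{s_1,\dots,s_n\}$, let $\psi(s)\in\mathfrak S_n$ satisfy $s_i*s_j=s_{\psi(s_i)(j)}$, $T(s)=s*s$, $\psi_k(s)=\psi(T^{k-1}(s))\circ\cdots\circ\psi(s)$; the class $d$ is the least $d\ge1$ with $\psi_d(s)=\mathrm{id}$ for all $s$. For $\sigma\in\mathfrak S_n$, $P_\sigma$ is the matrix with $1$ at $(i,\sigma(i))$ and $0$ elsewhere, and a permutation matrix is a matrix of this form. With $\zeta_d=e^{2i\pi/d}$, the germ $\overline G$ is the subgroup of $GL_n(\mathbb C)$ generated by $\bar s_i=\mathrm{diag}(1,\dots,1,\zeta_d,1,\dots,1)P_{\psi(s_i)}$ ($\zeta_d$ in position $i$), $1\le i\le n$. *)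

(* Defs.v *)
From HB Require Import structures.
From mathcomp Require Import all_boot all_order all_algebra all_fingroup all_field.
Set Implicit Arguments. Unset Strict Implicit. Unset Printing Implicit Defensive.
Import GRing.Theory Num.Theory.
Local Open Scope ring_scope.

(* A finite set S = {s_1,...,s_n} is modelled by 'I_n; cop s t = s * t. *)
Section CycleSet.
Variable n : nat.
Variable cop : 'I_n -> 'I_n -> 'I_n.

Definition is_cycle_set : Prop :=
  (forall s, bijective (cop s)) /\
  (forall s t u, cop (cop s t) (cop s u) = cop (cop t s) (cop t u)).

Definition Tmap (s : 'I_n) : 'I_n := cop s s.

Fixpoint psik (k : nat) (s : 'I_n) : 'I_n -> 'I_n :=
  match k with
  | 0 => id
  | k'.+1 => cop (iter k' Tmap s) \o psik k' s
  end.

Definition is_class (d : nat) : Prop :=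
  (0 < d)%N /\ (forall s, psik d s =1 id) /\
  (forall d', (0 < d')%N -> (d' < d)%N -> exists s, ~ (psik d' s =1 id)).

Definition psi (Hb : forall s, bijective (cop s)) (s : 'I_n) : 'S_n :=
  perm (bij_inj (Hb s)).

(* zeta_d = e^{2 i pi / d}: d.-root (-1) is the d-th root of -1 of minimal
   nonnegative argument, i.e. e^{i pi / d} (for d >= 2). *)
Definition zeta (d : nat) : algC := (d.-root (-1)) ^+ 2.

(* generator \bar s_i = diag(1,..,zeta_d (position i),..,1) P_{psi(s_i)} ,
   where P_sigma = perm_mx sigma has a 1 at (j, sigma j). *)
Definition germ_gen (Hb : forall s, bijective (cop s)) (d : nat) (i : 'I_n)
  : 'M[algC]_n :=
  diag_mx (\row_(j < n) (if j == i then zeta d else 1)) *m perm_mx (psi Hb i).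

Inductive in_germ (Hb : forall s, bijective (cop s)) (d : nat) : 'M[algC]_n -> Prop :=
  | germ1 : in_germ Hb d 1%:M
  | germ_mul A i : in_germ Hb d A -> in_germ Hb d (A *m germ_gen Hb d i)
  | germ_mulV A i : in_germ Hb d A -> in_germ Hb d (A *m invmx (germ_gen Hb d i)).

End CycleSet.

(* Main.v *)
Require Import Defs.
From mathcomp Require Import all_boot all_order all_algebra all_fingroup all_field.
From mathcomp Require Import ring zify.
Import Order.TTheory GRing.Theory Num.Theory.
Local Open Scope ring_scope.

Lemma unitC_of {d : nat} {y : algC} : (0 < d)%N -> y ^+ d = -1 -> `|y| = 1.
Proof.
move=> d0 yd; apply/eqP; rewrite -(pexpr_eq1 d0) ?normr_ge0 //.
by rewrite -normrX yd normrN1.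
Qed.

Lemma conjC_unit {y : algC} : `|y| = 1 -> y^* * y = 1.
Proof. by move=> ny; rewrite -normCKC ny expr1n. Qed.

Lemma conjR {d : nat} {y : algC} : y ^+ d = -1 -> (y^*) ^+ d = -1.
Proof. by move=> yd; rewrite -rmorphXn yd rmorphN1. Qed.

Lemma ReIm_unit {y : algC} : `|y| = 1 -> 'Re y ^+ 2 + 'Im y ^+ 2 = 1.
Proof. by move=> ny; rewrite -normC2_Re_Im ny expr1n. Qed.

Lemma onepRe {w : algC} : `|w| = 1 -> 1 + 'Re w = `|1 + w| ^+ 2 / 2.
Proof.
move=> nw; rewrite normCKC rmorphD rmorph1 ReE.
have h := conjC_unit nw.
have -> : (1 + w^*) * (1 + w) = 2 + (w + w^*) by rewrite mulrDl !mulrDr h; ring.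
by field.
Qed.
Lemma N1neq1 : (-1 : algC) != 1.
Proof. by rewrite -subr_eq0 -opprD oppr_eq0 -(natrD _ 1 1) pnatr_eq0. Qed.
Lemma count_lt (T : eqType) (p q : pred T) s x :
  (forall w, q w -> p w) -> x \in s -> p x -> ~~ q x -> (count q s < count p s)%N.
Proof.
move=> qp; elim: s => //= a s IH; rewrite inE => /orP [/eqP ->|xs] px nqx.
  rewrite px (negbTE nqx) /= add0n add1n ltnS; exact: sub_count.
have := IH xs px nqx; have : (q a <= p a)%N by case: (q a) (qp a) => // ->.
lia.
Qed.

Lemma upper_half (y : algC) : exists2 w, (w = y \/ w = y^*) & 0 <= 'Im w.
Proof.
case/orP: (real_leVge (Creal_Im y) (real0 _)) => h; last by exists y; auto.
by exists y^*; [right|rewrite Im_conj oppr_ge0].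
Qed.

Section Prim.
Variable d : nat.
Hypothesis d2 : (2 <= d)%N.
Let d0 : (0 < d)%N := ltnW d2.
Let r := d.-root (-1 : algC).
Let rd : r ^+ d = -1 := rootCK d0 (-1).
Let nr : `|r| = 1 := unitC_of d0 rd.
Let Imr0 : 0 <= 'Im r := @Im_rootC_ge0 _ d (-1) d2.
Variable z : algC.
Hypothesis zP : (2 * d).-primitive_root z.

Lemma zd : z ^+ d = -1.
Proof.
have : (z ^+ d) ^+ 2 == 1 by rewrite -exprM mulnC prim_expr_order.
rewrite sqrf_eq1 => /orP [/eqP h|/eqP //].
have := prim_order_dvd zP d; rewrite h eqxx => /dvdn_leq; lia.
Qed.

Lemma z2 : z ^+ 2 != 1.
Proof. by rewrite -(prim_order_dvd zP); apply/negP => /dvdn_leq; lia. Qed.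

Lemma Imr_gt0 : 0 < 'Im r.
Proof.
rewrite lt_def Imr0 andbT; apply/eqP => Im0.
have rR : r \is Num.real by apply/Creal_ImP.
have : r ^+ 2 == 1 by rewrite expr2 -{1}(conj_Creal rR) (conjC_unit nr).
rewrite sqrf_eq1 => /orP [/eqP r1|/eqP rN1].
  by move: rd; rewrite r1 expr1n => /eqP; rewrite eq_sym (negbTE N1neq1).
have [w wz Hw] := upper_half z.
have wd : w ^+ d = -1 by case: wz => ->; [exact: zd | exact: conjR zd].
have := rootC_Re_max d0 wd Hw; rewrite -/r rN1.
have -> : 'Re (-1 : algC) = -1 by rewrite raddfN /= (Creal_ReP 1 (real1 _)).
rewrite -subr_ge0 -opprD oppr_ge0 onepRe ?(unitC_of d0 wd) //.
rewrite pmulr_lle0 ?invr_gt0 ?ltr0n // => h.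
have : `|1 + w| ^+ 2 = 0 by apply/eqP; rewrite eq_le h exprn_ge0.
move/eqP; rewrite expf_eq0 /= normr_eq0 addr_eq0 => /eqP wN1.
have : w ^+ 2 = 1 by rewrite -sqrrN -wN1 expr1n.
case: wz => -> h2; first by move: z2; rewrite h2 eqxx.
move: z2; by rewrite -[z]conjCK -rmorphXn h2 rmorph1 eqxx.
Qed.


Let S := mkseq (fun i => z ^+ i) (2 * d).
Lemma inS y : y ^+ d = -1 -> y \in S.
Proof.
move=> yd; have h : y ^+ (2 * d) = 1 by rewrite mulnC exprM yd; ring.
have [i ->] := prim_rootP zP h.
by rewrite /S /mkseq; apply: map_f; rewrite mem_iota /= ltn_ord.
Qed.

Let N y := count (fun w => 'Re y < 'Re w) S.

Lemma rconj : r^* = r ^+ (2 * d).-1.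
Proof.
have r2d : r ^+ (2 * d) = 1 by rewrite mulnC exprM rd; ring.
rewrite -[LHS]mulr1 -r2d -{1}(@prednK (2 * d)); last by lia.
by rewrite exprS mulrA (conjC_unit nr) mul1r.
Qed.

Lemma descent m : forall y, y ^+ d = -1 -> (N y < m)%N -> exists j, y = r ^+ j.
Proof.
have Isr := Imr_gt0.
elim: m => // m IH.
have back : forall y', (exists w', (w' = y' \/ w' = y'^*) /\ exists j, w' = r ^+ j) ->
    exists k, y' = r ^+ k.
  move=> y' [w' [[e|e] [j hj]]]; first by exists j; rewrite -e.
  exists ((2 * d).-1 * j)%N.
  by rewrite -[y']conjCK -e hj exprM -rconj rmorphXn.
have H : forall y, y ^+ d = -1 -> (N y < m.+1)%N -> 0 <= 'Im y -> exists j, y = r ^+ j.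
  move=> y yd Nm Hy.
  have [->|ner] := eqVneq y r; first by exists 1%N; rewrite expr1.
  have ny := unitC_of d0 yd.
  have hx := ReIm_unit ny; have hc := ReIm_unit nr.
  set c := 'Re r in hc *; set s := 'Im r in Isr hc *.
  set x := 'Re y in hx *; set t := 'Im y in Hy hx *.
  have lt_xc : x < c.
    rewrite lt_neqAle rootC_Re_max // andbT; apply: contraNneq ner => exc.
    apply/eqP/eqCP; split => //.
    have e2 : t ^+ 2 = s ^+ 2 by apply: (addrI (c ^+ 2)); rewrite hc -exc hx.
    move/eqP: e2; rewrite eqf_sqr => /orP [/eqP //|/eqP ets].
    by move: Hy; rewrite ets oppr_ge0 => h; have := lt_le_trans Isr h; rewrite ltxx.
  have cr := conjC_unit nr.
  set w := y * r^*.
  have nw : `|w| = 1 by rewrite normrM norm_conjC ny nr mulr1.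
  have v_def : 'Re w = x * c + t * s by rewrite ReM Re_conj Im_conj; ring.
  have u_def : 'Im w = c * t - x * s by rewrite ImM Re_conj Im_conj; ring.
  have iden : 'Im w * (s + t) = (c - x) * (1 + 'Re w).
    have e : (c * t - x * s) * (s + t) - (c - x) * (1 + (x * c + t * s)) =
             c * (x ^+ 2 + t ^+ 2 - 1) - x * (c ^+ 2 + s ^+ 2 - 1) by ring.
    apply/eqP; rewrite u_def v_def -subr_eq0 e hx hc.
    by apply/eqP; ring.
  have v_pos : 0 < 1 + 'Re w.
    rewrite onepRe // divr_gt0 ?ltr0n // exprn_gt0 // normr_gt0 addr_eq0.
    apply/eqP => e1.
    have ew : w = -1 by rewrite -[w]opprK -e1.
    have ey : y = - r by rewrite -[y]mulr1 -cr mulrA -/w ew mulN1r.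
    move: Hy; rewrite /t ey raddfN /= -/s oppr_ge0 => h.
    by have := lt_le_trans Isr h; rewrite ltxx.
  have st_pos : 0 < s + t by rewrite ltr_wpDr.
  have u_pos : 0 < 'Im w.
    by rewrite -(pmulr_lgt0 _ st_pos) iden mulr_gt0 // subr_gt0.
  set y' := w * r^*.
  have y'd : y' ^+ d = -1 by rewrite /y' /w !exprMn yd (conjR rd); ring.
  have Rey' : 'Re y' = x + 2 * s * 'Im w.
    have e : (x * c + t * s) * c - (c * t - x * s) * (- s) - (x + 2 * s * (c * t - x * s))
       = x * (c ^+ 2 + s ^+ 2 - 1) by ring.
    apply/eqP; rewrite -subr_eq0 ReM Re_conj Im_conj v_def u_def -/c -/s e hc subrr mulr0 //.
  have lty : x < 'Re y'.
    by rewrite Rey' ltrDl mulr_gt0 // mulr_gt0 // ltr0n.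
  have Ny' : (N y' < m)%N.
    have := @count_lt _ (fun w => x < 'Re w) (fun w => 'Re y' < 'Re w) S y'.
    move=> /(_ _ (inS _ y'd) lty (negbT (ltxx _))) h.
    rewrite -ltnS; apply: leq_trans Nm; apply: h => w0 /=; exact: lt_trans.
  have [w' w'y Hw'] := upper_half y'.
  have w'd : w' ^+ d = -1 by case: w'y => ->; [exact: y'd | exact: conjR y'd].
  have Nw' : N w' = N y' by case: w'y => ->; rewrite /N ?Re_conj.
  have Nw'' : (N w' < m)%N by rewrite Nw'.
  have [k hk] := back y' (ex_intro _ w' (conj w'y (IH w' w'd Nw''))).
  exists (k + 2)%N; rewrite exprD -hk /y' /w expr2.
  by rewrite -!mulrA [r^* * (r * r)]mulrA cr mul1r cr mulr1.
move=> y yd Nm.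
have [w' w'y Hw'] := upper_half y.
have w'd : w' ^+ d = -1 by case: w'y => ->; [exact: yd | exact: conjR yd].
have Nw' : N w' = N y by case: w'y => ->; rewrite /N ?Re_conj.
apply: back; exists w'; split => //; apply: H => //; first by rewrite Nw'.
  
Qed.

Lemma r_gen y : y ^+ d = -1 -> exists j, y = r ^+ j.
Proof. by move=> yd; apply: (descent (N y).+1). Qed.

End Prim.

Lemma zeta_prim (d : nat) : (2 <= d)%N ->
  (((d.-root (-1 : algC)) ^+ 2) ^+ d = 1) /\
  (forall k, (0 < k < d)%N -> ((d.-root (-1 : algC)) ^+ 2) ^+ k != 1).
Proof.
move=> d2; have d0 : (0 < d)%N by lia.
split; first by rewrite -exprM mulnC exprM rootCK //; ring.
move=> k /andP [k0 kd]; apply/negP => /eqP hk.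
have h2d : (0 < 2 * d)%N by lia.
have [z zP] := C_prim_root_exists h2d.
have [j hj] := @r_gen d d2 z zP z (@zd d d2 z zP).
have : z ^+ (2 * k) == 1 by rewrite hj -exprM mulnC exprM exprM hk expr1n.
rewrite -(prim_order_dvd zP) => /dvdn_leq; lia.
Qed.

Definition mono {n : nat} (x : 'I_n -> algC) (s : 'S_n) : 'M[algC]_n :=
  \matrix_(i, j) (x i * (s i == j)%:R).

Lemma perm_mx_mono n (s : 'S_n) : perm_mx s = mono (fun _ => 1) s :> 'M[algC]_n.
Proof. by apply/matrixP => i j; rewrite /perm_mx !mxE mul1r. Qed.

Lemma mono1 n : mono (fun _ => 1) 1 = 1%:M :> 'M[algC]_n.
Proof. by rewrite -perm_mx_mono perm_mx1. Qed.

Lemma eq_mono n (x y : 'I_n -> algC) s : x =1 y -> mono x s = mono y s.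
Proof. by move=> h; apply/matrixP => i j; rewrite !mxE h. Qed.

Lemma mono_mul n (x y : 'I_n -> algC) (s t : 'S_n) :
  mono x s *m mono y t = mono (fun k => x k * y (s k)) (s * t)%g.
Proof.
apply/matrixP => i j; rewrite !mxE (bigD1 (s i)) //= big1 ?addr0.
  by rewrite !mxE eqxx permM mulr1 mulrA.
by move=> l /negPf nl; rewrite !mxE eq_sym nl mulr0 mul0r.
Qed.

Lemma mono_inj n (x y : 'I_n -> algC) s t : (forall k, x k != 0) ->
  mono x s = mono y t -> s = t /\ x =1 y.
Proof.
move=> nx e.
have h : forall k, x k = y k * (t k == s k)%:R.
  by move=> k; have := congr1 (fun M : 'M[algC]_n => M k (s k)) e; rewrite !mxE eqxx mulr1.
have st : s = t.
  apply/permP => k; have := nx k; rewrite h.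
  by case: (t k =P s k) => [->|_] //; rewrite mulr0 eqxx.
by split => // k; rewrite h st eqxx mulr1.
Qed.

Section Germ.
Variable n : nat.
Variable cop : 'I_n -> 'I_n -> 'I_n.
Variable Hb : forall s, bijective (cop s).
Hypothesis Hcs : forall s t u, cop (cop s t) (cop s u) = cop (cop t s) (cop t u).
Variable d : nat.
Hypothesis Hd : is_class cop d.

Let ps := psi Hb.
Lemma psE i u : ps i u = cop i u.
Proof. by rewrite /ps /psi permE. Qed.

Definition step (s : 'S_n) (j : 'I_n) : 'S_n := (s * ps (s j))%g.

Lemma step_comm s j k : step (step s j) k = step (step s k) j.
Proof.
rewrite /step !permM; apply/permP => u; rewrite !permM !psE; exact: Hcs.
Qed.

Lemma psik_self m a : psik cop m a a = iter m (Tmap cop) a.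
Proof. by elim: m => //= m ->. Qed.

Lemma iter_step m s j u :
  iter m (step^~ j) s u = psik cop m (s j) (s u).
Proof.
elim: m u => //= m IH u; rewrite /step permM IH psE.
by rewrite psik_self IH.
Qed.

Lemma iter_step_d s j : iter d (step^~ j) s = s.
Proof.
apply/permP => u; rewrite iter_step; case: Hd => _ [h _]; exact: h.
Qed.


Lemma d0 : (0 < d)%N.
Proof. by case: Hd. Qed.

Lemma comm_iter (T : Type) (f g : T -> T) : (forall x, f (g x) = g (f x)) ->
  forall m p x, iter m f (iter p g x) = iter p g (iter m f x).
Proof.
move=> fg.
have h : forall p x, f (iter p g x) = iter p g (f x).
  by elim=> //= p IH x; rewrite fg IH.
by elim=> //= m IH p x; rewrite IH h.
Qed.

Definition Fl (a : 'I_n -> nat) (s0 : 'S_n) (l : seq 'I_n) : 'S_n :=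
  foldr (fun k s => iter (a k) (step^~ k) s) s0 l.

Lemma Fl_incr (a a' : 'I_n -> nat) j s0 l :
  (forall k s, iter (a' k) (step^~ k) s =
     if k == j then step (iter (a k) (step^~ k) s) j else iter (a k) (step^~ k) s) ->
  Fl a' s0 l = iter (count_mem j l) (step^~ j) (Fl a s0 l).
Proof.
move=> Ha; elim: l => //= k l IH; rewrite Ha IH.
case: (k =P j) => [->|ne].
  have -> : (true + count_mem j l = (count_mem j l).+1)%N by [].
  by rewrite [in RHS]/= -!iterD addnC.
rewrite add0n; apply: comm_iter => x; exact: step_comm.
Qed.

Definition incr (x : 'I_d) : 'I_d := Ordinal (ltn_pmod x.+1 d0).
Definition upd (a : {ffun 'I_n -> 'I_d}) j : {ffun 'I_n -> 'I_d} :=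
  [ffun k => if k == j then incr (a k) else a k].
Definition Ff (a : {ffun 'I_n -> 'I_d}) : 'S_n :=
  Fl (fun k => nat_of_ord (a k)) 1%g (enum 'I_n).

Lemma iter_mod (x : 'I_d) j s :
  iter (incr x) (step^~ j) s = step (iter x (step^~ j) s) j.
Proof.
rewrite /incr /=; case: (ltnP x.+1 d) => h.
  by rewrite modn_small.
have e : x.+1 = d by have := ltn_ord x; lia.
rewrite e modnn /=; change (s = iter x.+1 (step^~ j) s).
by rewrite e iter_step_d.
Qed.

Lemma Ff_upd a j : Ff (upd a j) = step (Ff a) j.
Proof.
rewrite /Ff (@Fl_incr (fun k => nat_of_ord (a k)) _ j).
  by rewrite count_uniq_mem ?enum_uniq // mem_enum.
move=> k s; rewrite ffunE; case: (k =P j) => [->|_] //.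
exact: iter_mod.
Qed.

Definition zero : 'I_d := Ordinal d0.
Lemma Ff0 : Ff [ffun => zero] = 1%g.
Proof. by rewrite /Ff /Fl; elim: (enum _) => //= k l ->; rewrite ffunE. Qed.


Hypothesis Hz1 : zeta d ^+ d = 1.
Hypothesis Hzp : forall k, (0 < k < d)%N -> zeta d ^+ k != 1.

Lemma z_neq0 : zeta d != 0.
Proof.
apply/eqP => z0; move: Hz1; rewrite z0 expr0n (gtn_eqF d0) /= => /eqP.
by rewrite eq_sym oner_eq0.
Qed.

Lemma zexp_inj (x y : 'I_d) : zeta d ^+ x = zeta d ^+ y -> x = y.
Proof.
wlog le : x y / (x <= y)%N.
  move=> h e; case: (leqP x y) => l; first exact: h.
  by symmetry; apply: h (ltnW l) _; symmetry.
move=> e; apply/val_inj/eqP; rewrite /= eqn_leq le /= leqNgt; apply/negP => lt.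
have := Hzp (y - x); rewrite subn_gt0 lt /=.
have -> : (y - x < d)%N by have := ltn_ord y; lia.
move=> /(_ isT); apply/negP/negPn/eqP.
apply: (mulfI (expf_neq0 x z_neq0)); by rewrite -exprD subnKC ?e ?mulr1 // ltnW.
Qed.

Definition Mat (a : {ffun 'I_n -> 'I_d}) : 'M[algC]_n :=
  mono (fun k => zeta d ^+ a k) (Ff a).

Lemma gen_mono i : germ_gen Hb d i = mono (fun k => if k == i then zeta d else 1) (ps i).
Proof.
by rewrite /germ_gen mul_diag_mx perm_mx_mono; apply/matrixP => p q; rewrite !mxE mul1r.
Qed.

Lemma Mat_step a i : Mat a *m germ_gen Hb d i = Mat (upd a ((Ff a)^-1%g i)).
Proof.
rewrite /Mat gen_mono mono_mul Ff_upd.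
set j := ((Ff a)^-1)%g i.
have Fj : Ff a j = i by rewrite /j permKV.
have -> : (Ff a * ps i)%g = step (Ff a) j by rewrite /step Fj.
apply: eq_mono => k; rewrite ffunE.
case: (k =P j) => [->|nkj].
  by rewrite Fj eqxx /= -exprSr expr_mod.
by rewrite -{1}Fj (inj_eq perm_inj) (introF eqP nkj) mulr1.
Qed.

Lemma G_unit i : germ_gen Hb d i \in unitmx.
Proof.
rewrite /germ_gen unitmx_mul unitmx_perm andbT unitmxE det_diag unitfE.
apply/prodf_neq0 => k _; rewrite mxE; case: ifP => _; [exact: z_neq0 | exact: oner_neq0].
Qed.

Lemma Mat_inj : injective Mat.
Proof.
move=> a b /mono_inj [k|_ h]; first exact: expf_neq0 z_neq0.
by apply/ffunP => k; apply: zexp_inj; exact: h k.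
Qed.

Lemma germ_Mat A : in_germ Hb d A -> exists a, A = Mat a.
Proof.
elim => [|{}A i _ [a ->]|{}A i _ [a ->]].
- exists [ffun => zero]; rewrite /Mat Ff0 -mono1; apply: eq_mono => k.
  by rewrite ffunE expr0.
- by exists (upd a ((Ff a)^-1%g i)); exact: Mat_step.
- pose g := fun b => upd b ((Ff b)^-1%g i).
  have ginj : injective g.
    move=> b c e; apply: Mat_inj; apply: (can_inj (mulmxK (G_unit i))).
    by rewrite !Mat_step; exact: (congr1 Mat e).
  have [h hK Kh] := injF_bij ginj.
  exists (h a); rewrite -{1}(Kh a) /g -Mat_step mulmxK //; exact: G_unit.
Qed.

Lemma germ_perm (s : 'S_n) : in_germ Hb d (perm_mx s) -> perm_mx s = 1%:M :> 'M[algC]_n.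
Proof.
move=> /germ_Mat [a e]; rewrite perm_mx_mono in e.
have [e1 e2] := @mono_inj _ _ _ _ _ (fun _ => oner_neq0 _) e.
have a0 : a = [ffun => zero].
  by apply/ffunP => k; rewrite ffunE; apply: zexp_inj; rewrite -e2 expr0.
by rewrite e1 a0 Ff0 perm_mx1.
Qed.

End Germ.

Theorem mainTheorem12 (n : nat) (cop : 'I_n -> 'I_n -> 'I_n)
  (Hb : forall s, bijective (cop s))
  (Hcs : forall s t u, cop (cop s t) (cop s u) = cop (cop t s) (cop t u))
  (d : nat) (Hd : is_class cop d) (Hd2 : (2 <= d)%N) :
  forall sigma : 'S_n, in_germ Hb d (perm_mx sigma) -> perm_mx sigma = 1%:M :> 'M[algC]_n.
Proof.
move=> sigma H.
have [z1 zp] := zeta_prim d Hd2.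
exact: (@germ_perm n cop Hb Hcs d Hd z1 zp sigma H).
Qed.
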